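(* Let $\mu_Y\in\mathbb{R}$, $\sigma_Y>0$, $n\ge 2$, and let $X_1,\dots,X_n$ be i.i.d. with $X_i\sim LN(\mu_Y,\sigma_Y^2)$. Let $A_n=\frac1n\sum_{i=1}^n X_i$, $H_n=n\big/\sum_{i=1}^n (1/X_i)$, $K_n=\frac{A_n}{H_n}-1$, and $k=C_v^2=\exp(\sigma_Y^2)-1$. Then $$\operatorname{Var}(K_n)=\frac{2(n-1)}{n^2}\,k^2\left(1+k+\frac{k^2}{2n}\right)=\frac{2(n-1)}{n^2}\,C_v^4\left(1+C_v^2+\frac{C_v^4}{2n}\right),$$ and consequently $$\operatorname{sd}(K_n)=\frac{k}{n}\sqrt{2(n-1)\left(1+k+\frac{k^2}{2n}\right)}.$$
   Context: $X\sim LN(\mu_Y,\sigma_Y^2)$ means $\ln X\sim N(\mu_Y,\sigma_Y^2)$. For such $X$, $C_v=\sqrt{\operatorname{Var}(X)}/E[X]$ is the coefficient of variation and $k=E[X]\,E[1/X]-1$; one has $k=C_v^2=\exp(\sigma_Y^2)-1$. $\operatorname{sd}$ denotes the standard deviation (square root of the variance). *)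

(* Defs.v *)
(* No probability library is installed, so
   expectations w.r.t. i.i.d. lognormal variables are defined concretely as
   (iterated) improper Riemann integrals against the normal density in
   log-space:  X_i = exp(Y_i),  Y_i ~ N(mu, s^2) i.i.d. *)
From Stdlib Require Import Reals.
Open Scope R_scope.

Definition normal_pdf (mu s y : R) : R :=
  exp (- (y - mu) ^ 2 / (2 * s ^ 2)) / (s * sqrt (2 * PI)).

Definition improper_int_R (f : R -> R) (l : R) : Prop :=
  (forall a b, inhabited (Riemann_integrable f a b)) /\
  forall eps, 0 < eps -> exists A, forall a b (pr : Riemann_integrable f a b),
    a <= - A -> A <= b -> Rabs (RiemannInt pr - l) < eps.

Definition vcons (a : R) (x : nat -> R) : nat -> R :=
  fun i => match i with O => a | S j => x j end.

(* LN_expect n mu s g l  :<->  for X_1..X_n i.i.d. LN(mu, s^2) (stored at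
   indices 0..n-1 of the vector), E[g(X)] exists and equals l, computed as
   the iterated integral over the product of the n normal densities. *)
Fixpoint LN_expect (n : nat) (mu s : R) (g : (nat -> R) -> R) (l : R) : Prop :=
  match n with
  | O => g (fun _ => 0) = l
  | S m => exists h : R -> R,
      (forall y, LN_expect m mu s (fun x => g (vcons (exp y) x)) (h y)) /\
      improper_int_R (fun y => h y * normal_pdf mu s y) l
  end.

Definition arith_mean (n : nat) (x : nat -> R) : R :=
  sum_f_R0 (fun i => x i) (n - 1) / INR n.
Definition harm_mean (n : nat) (x : nat -> R) : R :=
  INR n / sum_f_R0 (fun i => / x i) (n - 1).
Definition K_stat (n : nat) (x : nat -> R) : R :=
  arith_mean n x / harm_mean n x - 1.

(* Main.v *)
Require Import Defs.
From Stdlib Require Import Reals Lra Psatz FunctionalExtensionality.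
From Coquelicot Require Import Coquelicot.
Open Scope R_scope.

Definition gf (t : R) : R := exp (- (t ^ 2)).

Lemma gf_cont x : continuous gf x.
Proof. apply (ex_derive_continuous (K := R_AbsRing) (V := R_NormedModule)). unfold gf. auto_derive. auto. Qed.

Lemma gf_exR a b : ex_RInt gf a b.
Proof. apply (ex_RInt_continuous (V := R_CompleteNormedModule)). intros; apply gf_cont. Qed.

Definition GG (x : R) : R := RInt gf 0 x.

Lemma GG_deriv x : is_derive GG x (gf x).
Proof.
  apply (is_derive_RInt gf GG 0 x).
  - apply filter_forall. intro b. apply (RInt_correct (V := R_CompleteNormedModule)). apply gf_exR.
  - apply gf_cont.
Qed.

Definition uf (x t : R) : R := exp (- (x ^ 2 * (1 + t ^ 2))) / (1 + t ^ 2).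

Lemma uf_deriv x t : is_derive (fun z => uf z t) x (- 2 * x * exp (- (x ^ 2 * (1 + t ^ 2)))).
Proof.
  unfold uf. auto_derive.
  - auto.
  - replace (exp (- (x * (x * 1) * (1 + t * (t * 1))))) with (exp (-(x^2*(1+t^2)))) by (f_equal; ring).
    field. nra.
Qed.

Definition dU (x t : R) := - 2 * x * exp (- (x ^ 2 * (1 + t ^ 2))).

Lemma uf_Derive x t : Derive (fun z => uf z t) x = dU x t.
Proof. apply is_derive_unique. apply uf_deriv. Qed.

Lemma dU_cont2 x t : continuity_2d_pt dU x t.
Proof.
  unfold dU.
  apply continuity_2d_pt_mult.
  - apply continuity_2d_pt_mult. apply continuity_2d_pt_const. apply continuity_2d_pt_id1.
  - apply continuity_1d_2d_pt_comp with (f := exp) (g := fun u v => - (u ^ 2 * (1 + v ^ 2))).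
    + apply derivable_continuous_pt. apply derivable_pt_exp.
    + apply continuity_2d_pt_opp. simpl.
      apply continuity_2d_pt_mult.
      * apply continuity_2d_pt_mult. apply continuity_2d_pt_id1.
        apply continuity_2d_pt_mult. apply continuity_2d_pt_id1. apply continuity_2d_pt_const.
      * apply continuity_2d_pt_plus. apply continuity_2d_pt_const.
        apply continuity_2d_pt_mult. apply continuity_2d_pt_id2.
        apply continuity_2d_pt_mult. apply continuity_2d_pt_id2. apply continuity_2d_pt_const.
Qed.

Lemma uf_cont x t : continuous (uf x) t.
Proof. apply (ex_derive_continuous (K := R_AbsRing) (V := R_NormedModule)). unfold uf. auto_derive. nra. Qed.

Definition UU (x : R) := RInt (uf x) 0 1.

Lemma UU_deriv x : is_derive UU x (RInt (fun t => dU x t) 0 1).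
Proof.
  unfold UU.
  replace (RInt (fun t => dU x t) 0 1) with (RInt (fun t => Derive (fun u => uf u t) x) 0 1).
  2:{ apply RInt_ext. intros; apply uf_Derive. }
  apply (is_derive_RInt_param uf 0 1 x).
  - apply filter_forall. intros y t _. eexists. apply uf_deriv.
  - intros t _. eapply continuity_2d_pt_ext. 2: apply dU_cont2.
    intros; symmetry; apply uf_Derive.
  - apply filter_forall. intro y. apply (ex_RInt_continuous (V := R_CompleteNormedModule)). intros; apply uf_cont.
Qed.

Lemma exp_le_mono a b : a <= b -> exp a <= exp b.
Proof. intros [H|H]. left; apply exp_increasing; auto. subst; lra. Qed.

Lemma RInt_dU x : RInt (fun t => dU x t) 0 1 = - 2 * gf x * GG x.
Proof.
  transitivity (RInt (fun t => scal (- 2 * gf x) (scal x (gf (x * t + 0)))) 0 1).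
  { apply RInt_ext. intros t _. unfold dU, gf, scal; simpl. unfold mult; simpl.
    replace (exp (- (x * (x * 1) * (1 + t * (t * 1))))) with (exp (- (x * (x * 1))) * exp (- ((x * t + 0) * ((x * t + 0) * 1)))).
    ring. rewrite <- exp_plus. f_equal. ring. }
  rewrite (RInt_scal (V := R_CompleteNormedModule)).
  2:{ apply (ex_RInt_continuous (V := R_CompleteNormedModule)). intros z _.
      apply (ex_derive_continuous (K := R_AbsRing) (V := R_NormedModule)).
      unfold gf, scal; simpl. unfold mult; simpl. auto_derive. auto. }
  rewrite (RInt_comp_lin (V := R_CompleteNormedModule)).
  2: apply gf_exR.
  unfold GG. replace (x * 0 + 0) with 0 by ring. replace (x * 1 + 0) with x by ring.
  reflexivity.
Qed.

Definition hh x := UU x + GG x * GG x.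

Lemma hh_deriv x : is_derive hh x 0.
Proof.
  assert (H := is_derive_plus (K := R_AbsRing) (V := R_NormedModule) _ _ x _ _ (UU_deriv x)
     (is_derive_mult (K := R_AbsRing) _ _ x _ _ (GG_deriv x) (GG_deriv x) ltac:(intros; apply Rmult_comm))).
  rewrite RInt_dU in H.
  replace (0:R) with (plus (- 2 * gf x * GG x) (plus (mult (gf x) (GG x)) (mult (GG x) (gf x)))).
  exact H.
  unfold plus, mult; simpl. unfold mult; simpl. ring.
Qed.

Lemma hh_const x : 0 <= x -> hh x = hh 0.
Proof.
  intros [H|H]. 2: subst; reflexivity.
  symmetry. apply (eq_is_derive (V := R_NormedModule)). 2: exact H.
  intros. apply hh_deriv.
Qed.

Lemma hh0 : hh 0 = PI / 4.
Proof.
  unfold hh, GG. rewrite RInt_point. unfold zero; simpl. rewrite Rmult_0_l, Rplus_0_r.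
  unfold UU.
  transitivity (RInt (fun t => / (1 + t^2)) 0 1).
  { apply RInt_ext. intros t _. unfold uf. replace (- (0 ^ 2 * (1 + t ^ 2))) with 0 by ring.
    rewrite exp_0. unfold Rdiv. rewrite Rmult_1_l. reflexivity. }
  apply (is_RInt_unique (V := R_CompleteNormedModule)).
  replace (PI/4) with (minus (atan 1) (atan 0)).
  2:{ rewrite atan_1, atan_0. unfold minus, plus, opp; simpl. ring. }
  apply (is_RInt_derive (V := R_CompleteNormedModule)).
  - intros z _. apply is_derive_Reals. apply derivable_pt_lim_atan.
  - intros z _. apply (ex_derive_continuous (K := R_AbsRing) (V := R_NormedModule)).
    auto_derive. nra.
Qed.

Lemma UU_ge0 x : 0 <= UU x.
Proof.
  unfold UU. apply RInt_ge_0. lra.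
  apply (ex_RInt_continuous (V := R_CompleteNormedModule)). intros; apply uf_cont.
  intros t _. unfold uf. apply Rlt_le. apply Rdiv_lt_0_compat. apply exp_pos. nra.
Qed.

Lemma UU_le x : UU x <= gf x.
Proof.
  unfold UU. replace (gf x) with (RInt (fun _ => gf x) 0 1).
  2:{ rewrite (RInt_const (V := R_CompleteNormedModule)). unfold scal; simpl. unfold mult; simpl. ring. }
  apply RInt_le. lra.
  apply (ex_RInt_continuous (V := R_CompleteNormedModule)). intros; apply uf_cont.
  apply (ex_RInt_continuous (V := R_CompleteNormedModule)). intros; apply continuous_const.
  intros t _. unfold uf, gf.
  apply Rle_trans with (exp (- (x ^ 2 * (1 + t ^ 2)))).
  - unfold Rdiv. rewrite <- (Rmult_1_r (exp (- (x ^ 2 * (1 + t ^ 2))))) at 2.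
    apply Rmult_le_compat_l. left; apply exp_pos.
    rewrite <- Rinv_1. apply Rinv_le_contravar. lra. nra.
  - apply exp_le_mono. nra.
Qed.

Lemma gf_le x : gf x <= / (1 + x ^ 2).
Proof.
  unfold gf. rewrite exp_Ropp. apply Rinv_le_contravar. nra.
  destruct (Req_dec (x^2) 0) as [E|E]. rewrite E, exp_0. lra.
  left. apply exp_ineq1. auto.
Qed.

Lemma GG_ge0 x : 0 <= x -> 0 <= GG x.
Proof.
  intros Hx. unfold GG. apply RInt_ge_0. auto. apply gf_exR.
  intros; left; apply exp_pos.
Qed.

Lemma GG_sq x : 0 <= x -> GG x * GG x = PI / 4 - UU x.
Proof. intros Hx. rewrite <- hh0, <- (hh_const x Hx). unfold hh. ring. Qed.

Lemma GG_bound x : 0 <= x -> Rabs (GG x - sqrt PI / 2) <= 2 / sqrt PI * / (1 + x ^ 2).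
Proof.
  intros Hx.
  assert (Hp : 0 < sqrt PI) by (apply sqrt_lt_R0; apply PI_RGT_0).
  assert (Hs : sqrt PI * sqrt PI = PI) by (apply sqrt_sqrt; left; apply PI_RGT_0).
  assert (H0 := GG_ge0 x Hx). assert (H1 := GG_sq x Hx). assert (H2 := UU_ge0 x).
  assert (H3 := UU_le x). assert (H4 := gf_le x).
  assert (E : GG x - sqrt PI / 2 = - UU x / (GG x + sqrt PI / 2)).
  { field_simplify_eq. nra. lra. }
  rewrite E. unfold Rdiv. rewrite Rabs_mult, Rabs_Ropp, Rabs_Rinv by lra.
  rewrite (Rabs_right (UU x)) by lra. rewrite (Rabs_right (GG x + sqrt PI * / 2)) by lra.
  apply Rle_trans with (UU x * / (sqrt PI * / 2)).
  - apply Rmult_le_compat_l. lra. apply Rinv_le_contravar. lra. lra.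
  - replace (2 * / sqrt PI * / (1 + x^2)) with (/ (1 + x^2) * / (sqrt PI * / 2)) by (field; split; apply Rgt_not_eq; nra).
    apply Rmult_le_compat_r. left; apply Rinv_0_lt_compat; lra. lra.
Qed.

Lemma GG_odd x : GG (- x) = - GG x.
Proof.
  unfold GG.
  transitivity (RInt gf (-1 * 0 + 0) (-1 * x + 0)).
  { f_equal; ring. }
  rewrite <- (RInt_comp_lin (V := R_CompleteNormedModule)).
  2:{ apply gf_exR. }
  rewrite (RInt_ext _ (fun y => scal (-1) (gf y))).
  2:{ intros y _. unfold gf. f_equal. f_equal. f_equal. ring. }
  rewrite (RInt_scal (V := R_CompleteNormedModule)). 2: apply gf_exR.
  unfold scal; simpl. unfold mult; simpl. ring.
Qed.

Ltac nz := repeat split; apply Rgt_not_eq; (lra || nra).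

Lemma GG_tail d : 0 < d -> exists Z, 0 <= Z /\ forall z, Z <= z -> Rabs (GG z - sqrt PI / 2) < d.
Proof.
  intros Hd.
  assert (Hp : 0 < sqrt PI) by (apply sqrt_lt_R0; apply PI_RGT_0).
  exists (2 / (sqrt PI * d)). assert (HZ : 0 < 2 / (sqrt PI * d)).
  { apply Rdiv_lt_0_compat. lra. nra. }
  split. lra. intros z Hz.
  eapply Rle_lt_trans. apply GG_bound. lra.
  set (Z := 2 / (sqrt PI * d)) in *.
  assert (Hz2 : Z < 1 + z ^ 2) by nra.
  apply Rlt_le_trans with (2 / sqrt PI * / Z).
  - apply Rmult_lt_compat_l. apply Rdiv_lt_0_compat; lra.
    apply Rinv_lt_contravar. nra. auto.
  - unfold Z. right. field. nz.
Qed.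

Definition mom (mu s c : R) : R := exp (c * mu + c ^ 2 * s ^ 2 / 2).

Lemma normal_moment mu s c : 0 < s ->
  improper_int_R (fun y => exp (c * y) * normal_pdf mu s y) (mom mu s c).
Proof.
  intros Hs.
  assert (Hp : 0 < sqrt PI) by (apply sqrt_lt_R0; apply PI_RGT_0).
  assert (H2 : 0 < sqrt 2) by (apply sqrt_lt_R0; lra).
  assert (H22 : sqrt 2 * sqrt 2 = 2) by (apply sqrt_sqrt; lra).
  assert (H2P : sqrt (2 * PI) = sqrt 2 * sqrt PI) by (apply sqrt_mult; lra || (left; apply PI_RGT_0)).
  set (f := fun y => exp (c * y) * normal_pdf mu s y).
  set (K := mom mu s c). assert (HK : 0 < K) by apply exp_pos.
  set (mu' := mu + c * s ^ 2). set (w := s * sqrt 2). assert (Hw : 0 < w) by (unfold w; nra).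
  set (F := fun y => K / sqrt PI * GG ((y - mu') / w)).
  assert (Fd : forall y, is_derive F y (f y)).
  { intro y. unfold F.
    assert (D1 := is_derive_comp (K := R_AbsRing) (V := R_NormedModule) GG (fun y => (y - mu') / w) y _ (/ w) (GG_deriv ((y - mu')/w))).
    assert (D2 : is_derive (fun y : R => (y - mu') / w) y (/ w)).
    { auto_derive. auto. field. lra. }
    specialize (D1 D2).
    apply (is_derive_scal _ _ (K / sqrt PI)) in D1.
    assert (E : f y = K / sqrt PI * (/ w * gf ((y - mu') / w))).
    2:{ rewrite E. exact D1. }
    unfold f, gf, K, mom, normal_pdf. rewrite H2P.
    replace (exp (c * y) * (exp (- (y - mu) ^ 2 / (2 * s ^ 2)) / (s * (sqrt 2 * sqrt PI))))
      with (exp (c * y + - (y - mu) ^ 2 / (2 * s ^ 2)) / (s * (sqrt 2 * sqrt PI))).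
    2:{ rewrite exp_plus. field. nz. }
    replace (c * y + - (y - mu) ^ 2 / (2 * s ^ 2)) with
      ((c * mu + c ^ 2 * s ^ 2 / 2) + - ((y - mu') / w) ^ 2).
    2:{ unfold mu', w. field_simplify_eq. 2: nz.
        replace (sqrt 2 ^ 2) with 2 by (simpl; lra). 
        replace (sqrt 2 ^ 4) with 4 by (simpl; nra). ring. }
    rewrite exp_plus. unfold w. field. nz. }
  assert (Fc : forall y, continuous f y).
  { intro y. apply (ex_derive_continuous (K := R_AbsRing) (V := R_NormedModule)).
    unfold f, normal_pdf. auto_derive. auto. }
  assert (Fex : forall a b, ex_RInt f a b).
  { intros a b. apply (ex_RInt_continuous (V := R_CompleteNormedModule)). intros; apply Fc. }
  assert (Fint : forall a b (pr : Riemann_integrable f a b), RiemannInt pr = F b - F a).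
  { intros a b pr. rewrite <- RInt_Reals.
    apply (is_RInt_unique (V := R_CompleteNormedModule)).
    apply (is_RInt_derive (V := R_CompleteNormedModule) F f).
    intros; apply Fd. intros; apply Fc. }
  split.
  { intros a b. constructor. apply ex_RInt_Reals_0. apply Fex. }
  intros eps Heps.
  destruct (GG_tail (eps * sqrt PI / (2 * K))) as [Z [HZ0 HZ]].
  { apply Rdiv_lt_0_compat; nra. }
  exists (Rabs mu' + w * Z). intros a b pr Ha Hb.
  rewrite Fint. unfold F.
  assert (Hzb : Z <= (b - mu') / w).
  { apply Rmult_le_reg_r with w. auto. unfold Rdiv. rewrite Rmult_assoc, Rinv_l by lra.
    assert (Rabs mu' >= mu') by (apply Rle_ge, Rle_abs). nra. }
  assert (Hza : Z <= - ((a - mu') / w)).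
  { apply Rmult_le_reg_r with w. auto. unfold Rdiv. rewrite Ropp_mult_distr_l, Rmult_assoc, Rinv_l by lra.
    assert (Rabs mu' >= - mu') by (apply Rle_ge; rewrite <- Rabs_Ropp; apply Rle_abs). nra. }
  apply HZ in Hzb. apply HZ in Hza.
  rewrite <- (Ropp_involutive ((a - mu') / w)), GG_odd.
  set (u := GG ((b - mu') / w)) in *. set (v := GG (- ((a - mu') / w))) in *.
  replace (K / sqrt PI * u - K / sqrt PI * - v - K) with
    (K / sqrt PI * ((u - sqrt PI / 2) + (v - sqrt PI / 2))) by (field; lra).
  rewrite Rabs_mult. rewrite Rabs_right.
  2:{ apply Rle_ge. left. apply Rdiv_lt_0_compat; lra. }
  apply Rle_lt_trans with (K / sqrt PI * (Rabs (u - sqrt PI / 2) + Rabs (v - sqrt PI / 2))).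
  { apply Rmult_le_compat_l. left; apply Rdiv_lt_0_compat; lra. apply Rabs_triang. }
  apply Rlt_le_trans with (K / sqrt PI * (eps * sqrt PI / (2 * K) + eps * sqrt PI / (2 * K))).
  { apply Rmult_lt_compat_l. apply Rdiv_lt_0_compat; lra. lra. }
  right. field. nz.
Qed.

Lemma imp_lin f1 f2 l1 l2 c : improper_int_R f1 l1 -> improper_int_R f2 l2 ->
  improper_int_R (fun y => f1 y + c * f2 y) (l1 + c * l2).
Proof.
  intros [I1 H1] [I2 H2]. split.
  { intros a b. destruct (I1 a b) as [p1]. destruct (I2 a b) as [p2].
    constructor. apply RiemannInt_P10; auto. }
  intros eps Heps.
  destruct (H1 (eps / 2)) as [A1 HA1]. lra.
  assert (Hc : 0 < Rabs c + 1) by (assert (0 <= Rabs c) by apply Rabs_pos; lra).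
  destruct (H2 (eps / (2 * (Rabs c + 1)))) as [A2 HA2].
  { apply Rdiv_lt_0_compat; lra. }
  exists (Rmax A1 A2). intros a b pr Ha Hb.
  destruct (I1 a b) as [p1]. destruct (I2 a b) as [p2].
  rewrite (RiemannInt_P13 p1 p2 pr).
  assert (E1 := HA1 a b p1 ltac:(assert (A1 <= Rmax A1 A2) by apply Rmax_l; lra) ltac:(assert (A1 <= Rmax A1 A2) by apply Rmax_l; lra)).
  assert (E2 := HA2 a b p2 ltac:(assert (A2 <= Rmax A1 A2) by apply Rmax_r; lra) ltac:(assert (A2 <= Rmax A1 A2) by apply Rmax_r; lra)).
  replace (RiemannInt p1 + c * RiemannInt p2 - (l1 + c * l2)) with
    ((RiemannInt p1 - l1) + c * (RiemannInt p2 - l2)) by ring.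
  eapply Rle_lt_trans. apply Rabs_triang. rewrite Rabs_mult.
  assert (Hca : 0 <= Rabs c) by apply Rabs_pos.
  assert (Rabs c * Rabs (RiemannInt p2 - l2) <= Rabs c * (eps / (2 * (Rabs c + 1)))).
  { apply Rmult_le_compat_l; lra. }
  assert (Rabs c * (eps / (2 * (Rabs c + 1))) <= eps / 2).
  { unfold Rdiv. rewrite Rinv_mult. 
    assert (0 < / (Rabs c + 1)) by (apply Rinv_0_lt_compat; lra).
    assert (Rabs c * / (Rabs c + 1) <= 1).
    { apply Rmult_le_reg_r with (Rabs c + 1). lra. rewrite Rmult_assoc, Rinv_l by lra. lra. }
    nra. }
  lra.
Qed.

Lemma imp_ext f g l : (forall y, f y = g y) -> improper_int_R f l -> improper_int_R g l.
Proof. intros E H. replace g with f. auto. apply functional_extensionality; auto. Qed.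

Lemma imp_scale f l c : improper_int_R f l -> improper_int_R (fun y => c * f y) (c * l).
Proof.
  intros H. replace (c * l) with (l + (c - 1) * l) by ring.
  eapply imp_ext. 2: apply (imp_lin _ _ _ _ (c - 1) H H). intros; simpl; ring.
Qed.

Section LN.
Variables mu s : R.

Lemma LN_ext n g g' l : (forall x, g x = g' x) -> LN_expect n mu s g l -> LN_expect n mu s g' l.
Proof. intros E H. replace g' with g. auto. apply functional_extensionality; auto. Qed.

Lemma LN_ext_pos n : forall g g' l, (forall x, (forall i, (i < n)%nat -> 0 < x i) -> g x = g' x) ->
  LN_expect n mu s g l -> LN_expect n mu s g' l.
Proof.
  induction n as [|m IH]; intros g g' l E H; simpl in *.
  - rewrite <- E. auto. intros; lia.
  - destruct H as [h [Hh Hi]]. exists h. split; auto.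
    intro y. apply (IH (fun x => g (vcons (exp y) x))); auto.
    intros x Hx. apply E. intros [|i] Hi'; simpl. apply exp_pos. apply Hx. lia.
Qed.

Lemma LN_lin n : forall g1 g2 l1 l2 c, LN_expect n mu s g1 l1 -> LN_expect n mu s g2 l2 ->
  LN_expect n mu s (fun x => g1 x + c * g2 x) (l1 + c * l2).
Proof.
  induction n as [|m IH]; intros g1 g2 l1 l2 c H1 H2; simpl in *.
  - subst; auto.
  - destruct H1 as [h1 [Hh1 Hi1]]. destruct H2 as [h2 [Hh2 Hi2]].
    exists (fun y => h1 y + c * h2 y). split.
    + intro y. apply (IH (fun x => g1 (vcons (exp y) x)) (fun x => g2 (vcons (exp y) x))); auto.
    + eapply imp_ext. 2: apply (imp_lin _ _ _ _ c Hi1 Hi2). intros; simpl; ring.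
Qed.

Lemma LN_scale n g l c : LN_expect n mu s g l -> LN_expect n mu s (fun x => c * g x) (c * l).
Proof.
  intros H. replace (c * l) with (l + (c - 1) * l) by ring.
  eapply LN_ext. 2: apply (LN_lin _ _ _ _ _ (c - 1) H H). intros; simpl; ring.
Qed.

Lemma LN_prod m phi psi l a : LN_expect m mu s psi l ->
  improper_int_R (fun y => phi (exp y) * normal_pdf mu s y) a ->
  LN_expect (S m) mu s (fun x => phi (x O) * psi (fun i => x (S i))) (a * l).
Proof.
  intros H I. simpl. exists (fun y => phi (exp y) * l). split.
  - intro y. apply (LN_scale m psi l (phi (exp y))). exact H.
  - replace (a * l) with (l * a) by ring.
    eapply imp_ext. 2: apply (imp_scale _ _ l I). intros; simpl; ring.
Qed.

Lemma LN_sum n (F : nat -> (nat -> R) -> R) (L : nat -> R) N :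
  (forall i, (i <= N)%nat -> LN_expect n mu s (F i) (L i)) ->
  LN_expect n mu s (fun x => sum_f_R0 (fun i => F i x) N) (sum_f_R0 L N).
Proof.
  induction N as [|N IH]; intros H; simpl.
  - apply H. lia.
  - replace (sum_f_R0 L N + L (S N)) with (sum_f_R0 L N + 1 * L (S N)) by ring.
    eapply LN_ext. 2: apply LN_lin. 2: apply IH; intros; apply H; lia. 2: apply H; lia.
    intros; simpl; ring.
Qed.

End LN.

Fixpoint sumv (n : nat) (x : nat -> R) : R :=
  match n with O => 0 | S m => x O + sumv m (fun i => x (S i)) end.

Definition momn (mu s : R) (i j : nat) : R := mom mu s (INR i - INR j).
Arguments momn : simpl never.
Arguments Binomial.C : simpl never.

Fixpoint Mr (mu s : R) (n p q : nat) : R :=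
  match n with
  | O => match p, q with O, O => 1 | _, _ => 0 end
  | S m => sum_f_R0 (fun i => sum_f_R0 (fun j =>
             Binomial.C p i * Binomial.C q j * momn mu s i j * Mr mu s m (p - i) (q - j)) q) p
  end.

Lemma sum_mult_r (a : nat -> R) N c : sum_f_R0 a N * c = sum_f_R0 (fun i => a i * c) N.
Proof. induction N; simpl; [ring| rewrite <- IHN; ring]. Qed.
Lemma sum_mult_l (a : nat -> R) N c : c * sum_f_R0 a N = sum_f_R0 (fun i => c * a i) N.
Proof. induction N; simpl; [ring| rewrite <- IHN; ring]. Qed.

Lemma exp_pow_nat y i : exp y ^ i = exp (INR i * y).
Proof.
  induction i. simpl. rewrite Rmult_0_l, exp_0. auto.
  rewrite S_INR. simpl. rewrite IHi, <- exp_plus. f_equal. ring.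
Qed.

Lemma phi_moment mu s (i j : nat) (c : R) : 0 < s ->
  improper_int_R (fun y => (c * exp y ^ i * (/ exp y) ^ j) * normal_pdf mu s y) (c * momn mu s i j).
Proof.
  intros Hs. eapply imp_ext. 2: apply (imp_scale _ _ c (normal_moment mu s (INR i - INR j) Hs)).
  intro y. simpl. rewrite pow_inv, !exp_pow_nat, <- exp_Ropp.
  replace ((INR i - INR j) * y) with (INR i * y + - (INR j * y)) by ring.
  rewrite exp_plus. unfold momn, mom; ring.
Qed.

Lemma Mom_gen mu s : 0 < s -> forall n p q,
  LN_expect n mu s (fun x => sumv n x ^ p * sumv n (fun i => / x i) ^ q) (Mr mu s n p q).
Proof.
  intros Hs n. induction n as [|m IH]; intros p q.
  - simpl. destruct p, q; simpl; ring.
  - eapply LN_ext.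
    2:{ apply LN_sum with (F := fun i x => sum_f_R0 (fun j =>
          (Binomial.C p i * Binomial.C q j * x O ^ i * (/ x O) ^ j) *
          (sumv m (fun k => x (S k)) ^ (p - i) * sumv m (fun k => / x (S k)) ^ (q - j))) q).
        intros i _. apply LN_sum with (F := fun j x =>
          (Binomial.C p i * Binomial.C q j * x O ^ i * (/ x O) ^ j) *
          (sumv m (fun k => x (S k)) ^ (p - i) * sumv m (fun k => / x (S k)) ^ (q - j))).
        intros j _.
        apply (LN_prod mu s m (fun e => Binomial.C p i * Binomial.C q j * e ^ i * (/ e) ^ j)
                 (fun x => sumv m x ^ (p - i) * sumv m (fun k => / x k) ^ (q - j))).
        apply IH. apply phi_moment; auto. }
    intro x. cbn [sumv].
    rewrite !binomial.
    rewrite sum_mult_r. apply sum_eq. intros i _.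
    rewrite sum_mult_l. apply sum_eq. intros j _. ring.
Qed.

Section Closed.
Variables mu s : R.
Local Notation al := (mom mu s 1).
Local Notation be := (mom mu s (-1)).

Lemma C00 : Binomial.C 0 0 = 1. Proof. unfold Binomial.C; simpl; field. Qed.
Lemma C10 : Binomial.C 1 0 = 1. Proof. unfold Binomial.C; simpl; field. Qed.
Lemma C11 : Binomial.C 1 1 = 1. Proof. unfold Binomial.C; simpl; field. Qed.
Lemma C20 : Binomial.C 2 0 = 1. Proof. unfold Binomial.C; simpl; field. Qed.
Lemma C21 : Binomial.C 2 1 = 2. Proof. unfold Binomial.C; simpl; field. Qed.
Lemma C22 : Binomial.C 2 2 = 1. Proof. unfold Binomial.C; simpl; field. Qed.

Ltac momt := unfold momn, mom; simpl INR; repeat rewrite Rmult_1_r;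
  repeat rewrite <- exp_plus; f_equal; field.

Lemma m00 : momn mu s 0 0 = 1. Proof. unfold momn, mom. simpl INR. transitivity (exp 0). f_equal; field. apply exp_0. Qed.
Lemma m11 : momn mu s 1 1 = 1. Proof. unfold momn, mom. simpl INR. transitivity (exp 0). f_equal; field. apply exp_0. Qed.
Lemma m22 : momn mu s 2 2 = 1. Proof. unfold momn, mom. simpl INR. transitivity (exp 0). f_equal; field. apply exp_0. Qed.
Lemma m10 : momn mu s 1 0 = al. Proof. momt. Qed.
Lemma m21 : momn mu s 2 1 = al. Proof. momt. Qed.
Lemma m01 : momn mu s 0 1 = be. Proof. momt. Qed.
Lemma m12 : momn mu s 1 2 = be. Proof. momt. Qed.
Lemma m20 : momn mu s 2 0 = al ^ 3 * be. Proof. simpl pow. momt. Qed.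
Lemma m02 : momn mu s 0 2 = al * be ^ 3. Proof. simpl pow. momt. Qed.

Lemma Mr_closed n : let N := INR n in
  Mr mu s n 0 0 = 1 /\
  Mr mu s n 0 1 = N * be /\
  Mr mu s n 0 2 = (N^2 - N) * be^2 + N * al * be^3 /\
  Mr mu s n 1 0 = N * al /\
  Mr mu s n 1 1 = N + (N^2 - N) * al * be /\
  Mr mu s n 1 2 = (2*N^2 - N) * be + (N^3 - 3*N^2 + 2*N) * al * be^2 + (N^2 - N) * al^2 * be^3 /\
  Mr mu s n 2 0 = (N^2 - N) * al^2 + N * al^3 * be /\
  Mr mu s n 2 1 = (2*N^2 - N) * al + (N^3 - 3*N^2 + 2*N) * al^2 * be + (N^2 - N) * al^3 * be^2 /\
  Mr mu s n 2 2 = (2*N^2 - N) + (4*N^3 - 8*N^2 + 4*N) * al * be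
       + (N^4 - 6*N^3 + 11*N^2 - 6*N) * al^2 * be^2 + (2*N^3 - 6*N^2 + 4*N) * al^3 * be^3
       + (N^2 - N) * al^4 * be^4.
Proof.
  induction n as [|m IH]; intro N; subst N.
  - simpl. repeat split; ring.
  - rewrite S_INR. destruct IH as (H00 & H01 & H02 & H10 & H11 & H12 & H20 & H21 & H22).
    simpl Mr.
    rewrite ?C00, ?C10, ?C11, ?C20, ?C21, ?C22, ?m00, ?m11, ?m22, ?m10, ?m21, ?m01, ?m12, ?m20, ?m02.
    rewrite ?H00, ?H01, ?H02, ?H10, ?H11, ?H12, ?H20, ?H21, ?H22.
    repeat split; ring.
Qed.
End Closed.

Lemma sumv_last n : forall x, sumv (S n) x = sumv n x + x n.
Proof.
  induction n as [|n IH]; intro x.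
  - simpl. ring.
  - change (sumv (S (S n)) x) with (x O + sumv (S n) (fun i => x (S i))).
    rewrite IH. simpl. ring.
Qed.

Lemma sum_sumv n x : sum_f_R0 x n = sumv (S n) x.
Proof.
  induction n as [|n IH]. simpl. ring.
  simpl sum_f_R0. rewrite IH, (sumv_last (S n)). reflexivity.
Qed.

Lemma sumv_pos n : forall x, (1 <= n)%nat -> (forall i, (i < n)%nat -> 0 < x i) -> 0 < sumv n x.
Proof.
  induction n as [|n IH]; intros x Hn Hx. lia.
  simpl. destruct n as [|n].
  - simpl. assert (0 < x O) by (apply Hx; lia). lra.
  - assert (0 < x O) by (apply Hx; lia).
    assert (0 < sumv (S n) (fun i => x (S i))). { apply IH. lia. intros; apply Hx; lia. }
    lra.
Qed.

Lemma K_eq n x : (2 <= n)%nat -> (forall i, (i < n)%nat -> 0 < x i) ->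
  K_stat n x = / INR n ^ 2 * (sumv n x ^ 1 * sumv n (fun i => / x i) ^ 1) + -1 * (sumv n x ^ 0 * sumv n (fun i => / x i) ^ 0).
Proof.
  intros Hn Hx.
  assert (HA : 0 < sumv n x) by (apply sumv_pos; auto; lia).
  assert (HB : 0 < sumv n (fun i => / x i)).
  { apply sumv_pos. lia. intros i Hi. apply Rinv_0_lt_compat. auto. }
  assert (HN : 0 < INR n) by (apply lt_0_INR; lia).
  unfold K_stat, arith_mean, harm_mean.
  destruct n as [|n']. lia.
  replace (S n' - 1)%nat with n' by lia.
  rewrite !sum_sumv.
  replace (fun i => x i) with x by reflexivity.
  rewrite !pow_1, !pow_O. field. split; apply Rgt_not_eq; lra.
Qed.

Theorem proposition3 (mu s : R) (n : nat) :
  0 < s -> (2 <= n)%nat ->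
  let k := exp (s ^ 2) - 1 in
  let V := 2 * (INR n - 1) / INR n ^ 2 * k ^ 2 * (1 + k + k ^ 2 / (2 * INR n)) in
  exists m : R,
    LN_expect n mu s (K_stat n) m /\
    LN_expect n mu s (fun x => (K_stat n x - m) ^ 2) V /\
    V = 2 * (INR n - 1) / INR n ^ 2 * (sqrt k) ^ 4
          * (1 + (sqrt k) ^ 2 + (sqrt k) ^ 4 / (2 * INR n)) /\
    sqrt V = k / INR n * sqrt (2 * (INR n - 1) * (1 + k + k ^ 2 / (2 * INR n))).
Proof.
  intros Hs Hn k V.
  assert (HN : 2 <= INR n) by (replace 2 with (INR 2) by (simpl; ring); apply le_INR; auto).
  assert (Hq : exp (s ^ 2) = mom mu s 1 * mom mu s (-1)).
  { unfold mom. rewrite <- exp_plus. f_equal. field. }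
  assert (Hk : 0 <= k).
  { unfold k. destruct (Req_dec (s^2) 0) as [E|E]. rewrite E, exp_0; lra.
    assert (H := exp_ineq1 _ E). nra. }
  destruct (Mr_closed mu s n) as (H00 & H01 & H02 & H10 & H11 & H12 & H20 & H21 & H22).
  set (N := INR n) in *.
  set (al := mom mu s 1) in *. set (be := mom mu s (-1)) in *.
  exists ((N - 1) * k / N).
  split; [|split; [|split]].
  - replace ((N - 1) * k / N) with (/ N ^ 2 * Mr mu s n 1 1 + -1 * Mr mu s n 0 0).
    2:{ rewrite H11, H00. unfold k. rewrite Hq. field. apply Rgt_not_eq; lra. }
    eapply LN_ext_pos. 2: apply LN_lin; [apply LN_scale; apply Mom_gen; auto | apply Mom_gen; auto].
    intros x Hx. simpl. symmetry. apply K_eq; auto.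
  - set (m := (N - 1) * k / N).
    replace V with (/ N ^ 4 * Mr mu s n 2 2 + (- 2 * (1 + m) / N ^ 2) * Mr mu s n 1 1
                    + (1 + m) ^ 2 * Mr mu s n 0 0).
    2:{ rewrite H22, H11, H00. unfold V, m, k. fold N. rewrite Hq. field. apply Rgt_not_eq; lra. }
    eapply LN_ext_pos.
    2: apply LN_lin; [apply LN_lin; [apply LN_scale; apply Mom_gen; auto | apply Mom_gen; auto] | apply Mom_gen; auto].
    intros x Hx. simpl. rewrite K_eq; auto. fold N. simpl pow. field. apply Rgt_not_eq; lra.
  - unfold V. replace (sqrt k ^ 4) with (k ^ 2).
    replace (sqrt k ^ 2) with k. reflexivity.
    simpl. rewrite Rmult_1_r, sqrt_sqrt; auto.
    replace (sqrt k ^ 4) with ((sqrt k * sqrt k) ^ 2) by ring. rewrite sqrt_sqrt; auto.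
  - unfold V.
    replace (2 * (N - 1) / N ^ 2 * k ^ 2 * (1 + k + k ^ 2 / (2 * N))) with
      ((k / N) ^ 2 * (2 * (N - 1) * (1 + k + k ^ 2 / (2 * N)))) by (field; apply Rgt_not_eq; lra).
    rewrite sqrt_mult. rewrite sqrt_pow2. reflexivity.
    apply Rmult_le_pos; [auto| left; apply Rinv_0_lt_compat; lra].
    apply pow2_ge_0.
    apply Rmult_le_pos. lra.
    assert (0 <= k ^ 2 / (2 * N)). { apply Rmult_le_pos. apply pow2_ge_0. left; apply Rinv_0_lt_compat; lra. }
    lra.
Qed.
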